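(* In the maximum-weight online bipartite left-perfect matching problem with general nonnegative weights under vertex arrivals with a hard budget $k=4$ on the number of reassignments per arrival (defined in the context), the most-profitable-augmenting-path algorithm described in the context is $\frac12$-competitive: on every instance, the weight of the final left-perfect matching it outputs is at least $\frac12$ times the maximum weight of a left-perfect matching in $G$.
   Context: Problem: $G=(L\cup R,E)$ is a complete bipartite graph with $|L|\le|R|$ and edge weights $w:E\to\mathbb{Q}_{\ge 0}$ (no triangle inequality is assumed). The algorithm initially knows $R$ (and $k=4$). Over $|L|$ timesteps the vertices of $L$ arrive one at a time, together with all incident edges and their weights. At the end of each timestep the algorithm must output a left-perfect matching of the revealed graph, i.e., a matching in which every arrived vertex of $L$ is matched. The new matching $M_2$ must be obtainable from the previous one $M_1$ (empty before the first timestep) by at most $k$ (re)assignments, the number of (re)assignments being the number of vertices of nonzero degree in $M_1\triangle M_2$; once a vertex is matched it must remain matched afterwards. The weight of a matching is the sum of the weights of its edges. An augmenting path with respect to a matching $M$ is a path between two distinct vertices not covered by $M$ whose edges alternate between non-$M$ and $M$ edges; its profit is the weight of $M\triangle P$ minus the weight of $M$. Algorithm: when a vertex $u$ arrives, among all augmenting paths with respect to the current matching that contain $u$ and have at most $k$ vertices (i.e., length at most $3$), choose one $P$ of maximum profit and output $M\triangle P$. *)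

(* Defs.v *)
From HB Require Import structures.
From mathcomp Require Import all_boot all_order all_algebra.
Set Implicit Arguments. Unset Strict Implicit. Unset Printing Implicit Defensive.
Import Order.TTheory GRing.Theory Num.Theory.
Local Open Scope ring_scope.

(* Complete bipartite graph on L (left) and R (right); vertices are L + R,
   the edge {l, r} is represented by the pair (l, r) : L * R.
   A matching is a set of such pairs. *)

Section Online.
Variables (L R : finType).

Definition edge_of (x y : L + R) : option (L * R) :=
  match x, y with
  | inl l, inr r => Some (l, r)
  | inr r, inl l => Some (l, r)
  | _, _ => None
  end.

Definition consec (p : seq (L + R)) : seq ((L + R) * (L + R)) := zip p (behead p).

Definition path_edges (p : seq (L + R)) : seq (L * R) :=
  pmap (fun xy => edge_of xy.1 xy.2) (consec p).

Definition edge_set (p : seq (L + R)) : {set L * R} :=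
  [set e | e \in path_edges p].

Definition symdiff (A B : {set L * R}) : {set L * R} := (A :\: B) :|: (B :\: A).

Definition weight (w : L -> R -> rat) (M : {set L * R}) : rat :=
  \sum_(e in M) w e.1 e.2.

Definition is_matching (M : {set L * R}) : Prop :=
  forall e1 e2, e1 \in M -> e2 \in M -> (e1.1 = e2.1 \/ e1.2 = e2.2) -> e1 = e2.

(* M is a left-perfect matching of the graph revealed when the set A of left
   vertices has arrived (edges are only between A and R). *)
Definition left_perfect (A : {set L}) (M : {set L * R}) : Prop :=
  [/\ is_matching M,
      (forall e, e \in M -> e.1 \in A) &
      (forall l, l \in A -> exists r, (l, r) \in M)].

Definition covered (M : {set L * R}) (v : L + R) : bool :=
  match v with
  | inl l => [exists r, (l, r) \in M]
  | inr r => [exists l, (l, r) \in M]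
  end.

Definition in_revealed (A : {set L}) (v : L + R) : bool :=
  match v with inl l => l \in A | inr _ => true end.

Definition free_endpoints (M : {set L * R}) (p : seq (L + R)) : bool :=
  match p with
  | [::] => false
  | x :: p' => ~~ covered M x && ~~ covered M (last x p')
  end.

Definition augmenting (A : {set L}) (M : {set L * R}) (p : seq (L + R)) : bool :=
  [&& uniq p, 2 <= size p,
      all (in_revealed A) p,
      all (fun xy => edge_of xy.1 xy.2 != None) (consec p),
      sorted (fun e f => (e \in M) != (f \in M)) (path_edges p) &
      free_endpoints M p]%N.

Definition profit (w : L -> R -> rat) (M : {set L * R}) (p : seq (L + R)) : rat :=
  weight w (symdiff M (edge_set p)) - weight w M.

Definition candidate (k : nat) (A : {set L}) (M : {set L * R}) (u : L)
  (p : seq (L + R)) : bool :=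
  [&& augmenting A M p, inl u \in p & size p <= k]%N.

Definition best_path (w : L -> R -> rat) (k : nat) (A : {set L}) (M : {set L * R})
  (u : L) (P : seq (L + R)) : Prop :=
  candidate k A M u P /\
  (forall Q, candidate k A M u Q -> profit w M Q <= profit w M P).

(* alg_run w k A M s Mf : starting from arrived set A and matching M, when the
   vertices of s arrive in order, the algorithm (with any tie-breaking among
   maximum-profit paths) can end with the matching Mf. *)
Fixpoint alg_run (w : L -> R -> rat) (k : nat) (A : {set L}) (M : {set L * R})
  (s : seq L) (Mf : {set L * R}) : Prop :=
  match s with
  | [::] => Mf = M
  | u :: s' => exists P, best_path w k (u |: A) M u P /\
                 alg_run w k (u |: A) (symdiff M (edge_set P)) s' Mf
  end.

End Online.

(* Main.v *)
Require Import Defs.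
From HB Require Import structures.
From mathcomp Require Import all_boot all_order all_algebra.
Import Order.TTheory GRing.Theory Num.Theory.
Local Open Scope ring_scope.

Definition freeR {L R : finType} (M : {set L * R}) (r : R) := forall l, (l, r) \notin M.

Lemma cand_shape (L R : finType) (A : {set L}) (M : {set L * R}) (u : L) (p : seq (L + R)) :
  (forall e, e \in M -> e.1 \in A) -> u \notin A ->
  candidate 4 (u |: A) M u p ->
  (exists r, freeR M r /\ (p = [:: inl u; inr r] \/ p = [:: inr r; inl u])) \/
  (exists l1 r1 r2, (l1, r1) \in M /\ freeR M r2 /\
     (p = [:: inl u; inr r1; inl l1; inr r2] \/ p = [:: inr r2; inl l1; inr r1; inl u])).
Proof.
move=> HMA HuA.
have Hnu : forall a r, (a, r) \in M -> a != u.
  move=> a r /HMA /= Ha; apply/eqP => E; by rewrite -E Ha in HuA.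
rewrite /candidate /augmenting.
case: p => [|x1 [|x2 [|x3 [|x4 [|x5 p]]]]] //=;
  case: x1 => a1; case: x2 => a2 //=; try (case: x3 => a3 //=); try (case: x4 => a4 //=);
  rewrite ?andbF ?andbT ?andFb //= ?inE /=.
- case/andP=> /and3P[_ _ /existsPn F2] /orP[/eqP [] <- | /eqP //].
  by left; exists a2; split=> [l|]; [exact: F2 | left].
- case/andP=> /and3P[_ /existsPn F1 _] /eqP [] <-.
  by left; exists a1; split=> [l|]; [exact: F1 | right].
- case/andP=> /and5P[_ _ + /existsPn F1 /existsPn F3] _.
  by rewrite (negbTE (F1 a2)) (negbTE (F3 a2)).
- case/andP=> /and5P[_ _ + /existsPn F1 /existsPn F3] _.
  by rewrite (negbTE (F1 a2)) (negbTE (F3 a2)).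
- case/andP=> /and5P[_ _ /andP[+ +] /existsPn F1 /existsPn F4].
  rewrite (negbTE (F1 a2)) (negbTE (F4 a3)); case H32: ((a3, a2) \in M) => // _ _.
  have Hu3 := Hnu _ _ H32.
  case/or3P => [/eqP [] E | /eqP [] E | /eqP //].
  + subst a1. right; exists a3, a2, a4; split=> //; split=> [l|]; [exact: F4|left; done].
  + by rewrite E eqxx in Hu3.
- case/andP=> /and5P[_ _ /andP[+ +] /existsPn F1 /existsPn F4].
  rewrite (negbTE (F1 a2)) (negbTE (F4 a3)); case H23: ((a2, a3) \in M) => // _ _.
  have Hu2 := Hnu _ _ H23.
  case/orP => /eqP [] E.
  + by rewrite E eqxx in Hu2.
  + subst a4. right; exists a2, a3, a1; split=> //; split=> [l|]; [exact: F1|right; done].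
Qed.

Lemma u_uncov {L R : finType} {A : {set L}} {M : {set L * R}} {u : L} :
  (forall e, e \in M -> e.1 \in A) -> u \notin A -> ~~ [exists r, (u, r) \in M].
Proof. move=> HMA HuA; apply/existsPn => r; apply/negP => /HMA /=; exact/negP. Qed.

Lemma cand_short {L R : finType} {A : {set L}} {M : {set L * R}} {u : L} {r : R} :
  (forall e, e \in M -> e.1 \in A) -> u \notin A -> freeR M r ->
  candidate 4 (u |: A) M u [:: inl u; inr r].
Proof.
move=> HMA HuA Hr.
have Hr' : ~~ [exists l, (l, r) \in M] by apply/existsPn.
by rewrite /candidate /augmenting /= (u_uncov HMA HuA) Hr' !inE /= !eqxx.
Qed.

Lemma cand_long {L R : finType} {A : {set L}} {M : {set L * R}} {u l : L} {r r2 : R} :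
  (forall e, e \in M -> e.1 \in A) -> u \notin A -> (l, r) \in M -> freeR M r2 ->
  candidate 4 (u |: A) M u [:: inl u; inr r; inl l; inr r2].
Proof.
move=> HMA HuA Hlr Hr.
have Hr' : ~~ [exists l, (l, r2) \in M] by apply/existsPn.
have HlA : l \in A by exact: (HMA _ Hlr).
have Hul : (inl u == inl l :> L + R) = false.
  by apply/eqP => -[E]; rewrite E HlA in HuA.
have Hur2 : (inl u == inr r2 :> L + R) = false by [].
have Hrr2 : (inr r == inr r2 :> L + R) = false.
  by apply/eqP => -[E]; move: (Hr l); rewrite -E Hlr.
have Hur : (u, r) \in M = false.
  by apply/negbTE; apply/negP => /HMA /=; apply/negP.
rewrite /candidate /augmenting /= (u_uncov HMA HuA) Hr' !inE eqxx /=.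
by rewrite Hul Hur2 Hrr2 Hlr Hur (negbTE (Hr l)) HlA /= !eqxx orbT.
Qed.

Lemma sd_short {L R : finType} {M : {set L * R}} {u : L} {r : R} {p} :
  (u, r) \notin M -> p = [:: inl u; inr r] \/ p = [:: inr r; inl u] ->
  symdiff M (edge_set p) = (u, r) |: M.
Proof.
move=> Hur Hp; apply/setP => x.
have -> : edge_set p = [set (u, r)] by case: Hp => ->; apply/setP => y; rewrite !inE.
rewrite /symdiff !inE.
by case: eqP => [->|_]; rewrite ?(negbTE Hur) /= ?andbF ?orbF ?andbT.
Qed.

Lemma sd_long {L R : finType} {M : {set L * R}} {u l : L} {r r2 : R} {p} :
  (u, r) \notin M -> (l, r) \in M -> (l, r2) \notin M ->
  p = [:: inl u; inr r; inl l; inr r2] \/ p = [:: inr r2; inl l; inr r; inl u] ->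
  symdiff M (edge_set p) = (u, r) |: ((l, r2) |: (M :\ (l, r))).
Proof.
move=> Hur Hlr Hlr2 Hp; apply/setP => x.
have -> : edge_set p = [set (u, r); (l, r); (l, r2)].
  by case: Hp => ->; apply/setP => y; rewrite !inE /=; case: (y == (u, r)); case: (y == (l, r)); case: (y == (l, r2)).
rewrite /symdiff !inE.
case: (x =P (u, r)) => [->|_]; first by rewrite (negbTE Hur).
case: (x =P (l, r)) => [->|_].
  have Hne : ((l, r) == (l, r2)) = false.
    by apply/eqP => E; rewrite E in Hlr; rewrite Hlr in Hlr2.
  by rewrite Hlr Hne.
case: (x =P (l, r2)) => [->|_]; first by rewrite (negbTE Hlr2).
by case: (x \in M).
Qed.

From mathcomp Require Import lra.

Lemma u_notin {L R : finType} {A : {set L}} {M : {set L * R}} {u : L} r :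
  (forall e, e \in M -> e.1 \in A) -> u \notin A -> (u, r) \notin M.
Proof. by move=> HMA HuA; apply/negP => /HMA /=; apply/negP. Qed.

Lemma weight_short {L R : finType} (w : L -> R -> rat) (M : {set L * R}) u r :
  (u, r) \notin M -> weight w ((u, r) |: M) = w u r + weight w M.
Proof. by move=> H; rewrite /weight big_setU1. Qed.

Lemma weight_long {L R : finType} (w : L -> R -> rat) (M : {set L * R}) u l r r2 :
  u != l -> (u, r) \notin M -> (l, r) \in M -> (l, r2) \notin M ->
  weight w ((u, r) |: ((l, r2) |: (M :\ (l, r)))) = w u r - w l r + w l r2 + weight w M.
Proof.
move=> Hul Hur Hlr Hlr2.
rewrite /weight big_setU1 /=; last first.
  rewrite !inE (negbTE Hur) andbF orbF; apply/eqP => -[E _]; by rewrite E eqxx in Hul.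
rewrite big_setU1 /=; last by rewrite !inE negb_and (negbTE Hlr2) orbT.
rewrite [X in _ = _ + X](big_setD1 _ Hlr) /=.
lra.
Qed.

Lemma best_opt {L R : finType} (w : L -> R -> rat) (A : {set L}) (M : {set L * R}) u P :
  (forall e, e \in M -> e.1 \in A) -> u \notin A ->
  best_path w 4 (u |: A) M u P ->
  (forall r, freeR M r -> w u r <= profit w M P) /\
  (forall l r r2, (l, r) \in M -> freeR M r2 -> w u r - w l r + w l r2 <= profit w M P).
Proof.
move=> HMA HuA [_ Hbest]; split.
  move=> r Hr; have := Hbest _ (cand_short HMA HuA Hr).
  rewrite /profit (sd_short (u_notin r HMA HuA)); last by left.
  by rewrite weight_short ?(u_notin r HMA HuA) // addrK.
move=> l r r2 Hlr Hr2; have := Hbest _ (cand_long HMA HuA Hlr Hr2).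
have Hul : u != l by apply/eqP => E; move: (HMA _ Hlr) => /=; rewrite -E (negbTE HuA).
rewrite /profit (sd_long (u_notin r HMA HuA) Hlr (Hr2 l)); last by left.
by rewrite weight_long ?(u_notin r HMA HuA) ?(Hr2 l) // addrK.
Qed.

Definition Inv {L R : finType} (w : L -> R -> rat) (M : {set L * R}) (th : R -> rat) : Prop :=
  [/\ (forall l r, (l, r) \in M -> th r <= w l r),
      (forall r, freeR M r -> th r <= 0) &
      (forall l r r2, (l, r) \in M -> freeR M r2 -> th r <= w l r - w l r2)].

Lemma step_short {L R : finType} (w : L -> R -> rat) (hw : forall l r, 0 <= w l r)
  (M : {set L * R}) th u r0 g :
  Inv w M th -> freeR M r0 ->
  (forall r, freeR M r -> w u r <= g) ->
  (forall l r r2, (l, r) \in M -> freeR M r2 -> w u r - w l r + w l r2 <= g) ->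
  g = w u r0 ->
  Inv w ((u, r0) |: M) (fun r => Num.max (th r) (w u r - g)).
Proof.
move=> [I1 I2 I3] Hr0 O1 O2 Hg.
have Hfree : forall r, freeR ((u, r0) |: M) r -> freeR M r /\ r != r0.
  move=> r Hr; split.
    by move=> l; move: (Hr l); rewrite in_setU1 negb_or => /andP[].
  by apply/eqP => E; move: (Hr u); rewrite E in_setU1 eqxx.
split.
- move=> l r; rewrite in_setU1 => /orP[/eqP [-> ->] | Hlr]; rewrite ge_max.
    by have := I2 _ Hr0; have := hw u r0; move=> *; apply/andP; split; lra.
  have := I1 _ _ Hlr; have := O2 _ _ _ Hlr Hr0; have := hw l r0.
  by move=> *; apply/andP; split; lra.
- move=> r /Hfree [Hr _]; rewrite ge_max.
  by have := I2 _ Hr; have := O1 _ Hr; move=> *; apply/andP; split; lra.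
- move=> l r r3; rewrite in_setU1 => /orP[/eqP [-> ->] | Hlr] /Hfree [Hr3 _]; rewrite ge_max.
    by have := I2 _ Hr0; have := O1 _ Hr3; move=> *; apply/andP; split; lra.
  have := I3 _ _ _ Hlr Hr3; have := O2 _ _ _ Hlr Hr3.
  by move=> *; apply/andP; split; lra.
Qed.

Lemma step_long {L R : finType} (w : L -> R -> rat) (hw : forall l r, 0 <= w l r)
  (M : {set L * R}) th u l1 r1 r2 g :
  Inv w M th -> (l1, r1) \in M -> freeR M r2 ->
  (forall r, freeR M r -> w u r <= g) ->
  (forall l r r2, (l, r) \in M -> freeR M r2 -> w u r - w l r + w l r2 <= g) ->
  g = w u r1 - w l1 r1 + w l1 r2 ->
  Inv w ((u, r1) |: ((l1, r2) |: (M :\ (l1, r1)))) (fun r => Num.max (th r) (w u r - g)).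
Proof.
move=> [I1 I2 I3] Hl1 Hr2 O1 O2 Hg.
have Hfree : forall r, freeR ((u, r1) |: ((l1, r2) |: (M :\ (l1, r1)))) r -> freeR M r.
  move=> r Hr l; apply/negP => Hlr.
  case: (eqVneq (l, r) (l1, r1)) => [[_ E] | Hne].
    by move: (Hr u); rewrite E !inE eqxx.
  by move: (Hr l); rewrite !inE Hne Hlr !orbT.
have g0 := O1 _ Hr2; have := hw u r2 => g1.
split.
- move=> l r; rewrite !inE => /or3P[/eqP [-> ->] | /eqP [-> ->] | /andP[Hne Hlr]]; rewrite ge_max.
  + have := I3 _ _ _ Hl1 Hr2.
    by move=> *; apply/andP; split; lra.
  + have := I2 _ Hr2; have := hw l1 r2.
    by move=> *; apply/andP; split; lra.
  + have := I1 _ _ Hlr; have := O2 _ _ _ Hlr Hr2; have := hw l r2.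
    by move=> *; apply/andP; split; lra.
- move=> r /Hfree Hr; rewrite ge_max.
  by have := I2 _ Hr; have := O1 _ Hr; move=> *; apply/andP; split; lra.
- move=> l r r3; rewrite !inE => /or3P[/eqP [-> ->] | /eqP [-> ->] | /andP[Hne Hlr]] /Hfree Hr3;
    rewrite ge_max.
  + have := I3 _ _ _ Hl1 Hr2; have := O1 _ Hr3.
    by move=> *; apply/andP; split; lra.
  + have := I2 _ Hr2; have := O2 _ _ _ Hl1 Hr3.
    by move=> *; apply/andP; split; lra.
  + have := I3 _ _ _ Hlr Hr3; have := O2 _ _ _ Hlr Hr3.
    by move=> *; apply/andP; split; lra.
Qed.

Definition val {L R : finType} (w : L -> R -> rat) (M : {set L * R}) (r : R) : rat :=
  \sum_(e in M | e.2 == r) w e.1 e.2.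

Lemma val_ge0 {L R : finType} (w : L -> R -> rat) (hw : forall l r, 0 <= w l r) (M : {set L * R}) r :
  0 <= val w M r.
Proof. by apply: sumr_ge0 => e _; exact: hw. Qed.

Lemma val_ge {L R : finType} (w : L -> R -> rat) (hw : forall l r, 0 <= w l r) (M : {set L * R}) l r :
  (l, r) \in M -> w l r <= val w M r.
Proof.
move=> Hlr; rewrite /val (bigD1 (l, r)) /=; last by rewrite Hlr eqxx.
by rewrite lerDl sumr_ge0 // => e _; exact: hw.
Qed.

Lemma Inv_val {L R : finType} (w : L -> R -> rat) (hw : forall l r, 0 <= w l r) (M : {set L * R}) th r :
  Inv w M th -> th r <= val w M r.
Proof.
move=> [I1 I2 _].
case: (boolP [exists l, (l, r) \in M]) => [/existsP [l Hl] | /existsPn Hf].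
  exact: le_trans (I1 _ _ Hl) (val_ge w hw M l r Hl).
exact: le_trans (I2 _ Hf) (val_ge0 w hw M r).
Qed.

Lemma sum_val {L R : finType} (w : L -> R -> rat) (M : {set L * R}) :
  \sum_r val w M r = weight w M.
Proof. by rewrite /weight (partition_big snd predT) //. Qed.

Lemma run_main {L R : finType} (w : L -> R -> rat) (hw : forall l r, 0 <= w l r) :
  forall s A M th Mf, alg_run w 4 A M s Mf -> uniq s ->
  (forall x, x \in s -> x \notin A) -> (forall e, e \in M -> e.1 \in A) -> Inv w M th ->
  exists g : L -> rat, weight w Mf = weight w M + \sum_(x <- s) g x /\
    (forall r, th r <= val w Mf r) /\ (forall x r, x \in s -> w x r - g x <= val w Mf r).
Proof.
elim=> [|u s IH] A M th Mf /=.
  move=> -> _ _ _ HI; exists (fun _ => 0); rewrite big_nil addr0; split=> //; split=> // r.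
  exact: (Inv_val w hw _ _ _ HI).
move=> [P [Hbest Hrun]] /andP[Hus Hs] Hdis HMA HI.
have HuA := Hdis u (mem_head _ _).
have [O1 O2] := best_opt w A M u P HMA HuA Hbest.
set g0 := profit w M P.
set M' := symdiff M (edge_set P).
have [HMA' HI'] : (forall e, e \in M' -> e.1 \in u |: A) /\
                  Inv w M' (fun r => Num.max (th r) (w u r - g0)).
  case: (cand_shape L R A M u P HMA HuA (proj1 Hbest)) => [[r0 [Hr0 HP]] | [l1 [r1 [r2 [Hl1 [Hr2 HP]]]]]].
    have HM' : M' = (u, r0) |: M by exact: sd_short (u_notin r0 HMA HuA) HP.
    have Hg : g0 = w u r0.
      by rewrite /g0 /profit -/M' HM' weight_short ?(u_notin r0 HMA HuA) // addrK.
    split; last by rewrite HM'; exact: (step_short w hw) HI Hr0 O1 O2 Hg.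
    move=> e; rewrite HM' => /setU1P[-> | /HMA He]; rewrite !inE ?eqxx ?He ?orbT //.
  have Hul : u != l1.
    by apply/eqP => E; move: (HMA _ Hl1) => /=; rewrite -E (negbTE HuA).
  have HM' : M' = (u, r1) |: ((l1, r2) |: (M :\ (l1, r1))).
    exact: sd_long (u_notin r1 HMA HuA) Hl1 (Hr2 l1) HP.
  have Hg : g0 = w u r1 - w l1 r1 + w l1 r2.
    by rewrite /g0 /profit -/M' HM' weight_long ?(u_notin r1 HMA HuA) ?(Hr2 l1) // addrK.
  split; last by rewrite HM'; exact: (step_long w hw) HI Hl1 Hr2 O1 O2 Hg.
  move=> e; rewrite HM' !inE => /or3P[/eqP -> | /eqP -> | /andP[_ /HMA He]];
    rewrite ?eqxx ?He ?orbT //=.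
  by rewrite (HMA _ Hl1) orbT.
have Hdis' : forall x, x \in s -> x \notin u |: A.
  move=> x Hx; rewrite in_setU1 negb_or Hdis ?in_cons ?Hx ?orbT // andbT.
  by apply/eqP => E; rewrite -E Hx in Hus.
have [g' [Hw [Hth Hg']]] := IH _ _ _ _ Hrun Hs Hdis' HMA' HI'.
exists (fun x => if x == u then g0 else g' x).
split.
  rewrite big_cons eqxx Hw.
  have -> : \sum_(x <- s) (if x == u then g0 else g' x) = \sum_(x <- s) g' x.
    apply: eq_big_seq => x Hx; case: eqP => // E.
    by rewrite -E Hx in Hus.
  rewrite /g0 /profit -/M'; lra.
split.
  by move=> r; move: (Hth r); rewrite ge_max => /andP[].
move=> x r; rewrite in_cons => /orP[/eqP -> | Hx].
  by rewrite eqxx; move: (Hth r); rewrite ge_max => /andP[].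
case: eqP => [E | _]; first by rewrite -E Hx in Hus.
exact: Hg'.
Qed.

Theorem theorem3 (L R : finType) (w : L -> R -> rat)
  (hw : forall l r, 0 <= w l r) (hLR : (#|L| <= #|R|)%N)
  (s : seq L) (hs_uniq : uniq s) (hs_all : forall l : L, l \in s)
  (Mf : {set L * R}) (hrun : alg_run w 4 set0 set0 s Mf)
  (Mopt : {set L * R}) (hopt : left_perfect [set: L] Mopt) :
  (1 / 2) * weight w Mopt <= weight w Mf.
Proof.
have HI0 : Inv w set0 (fun _ : R => 0).
  by split=> [l r|r _|l r r2]; rewrite ?inE.
have [g [Hw [_ Hg]]] := run_main w hw _ _ _ _ _ hrun hs_uniq
  (fun x _ => ltac:(by rewrite inE)) (fun e => ltac:(by rewrite inE)) HI0.
rewrite /weight big_set0 add0r -/(weight w Mf) in Hw.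
case: hopt => Hmatch _ Hcov.
have Hkey : weight w Mopt <= \sum_(e in Mopt) g e.1 + \sum_(e in Mopt) val w Mf e.2.
  rewrite -big_split /weight; apply: ler_sum => -[l r] _ /=.
  by have := Hg l r (hs_all l); lra.
have Hinj1 : {in Mopt &, injective (@fst L R)}.
  by move=> e1 e2 H1 H2 E; apply: Hmatch => //; left.
have Hinj2 : {in Mopt &, injective (@snd L R)}.
  by move=> e1 e2 H1 H2 E; apply: Hmatch => //; right.
have H1 : \sum_(e in Mopt) g e.1 = \sum_(x <- s) g x.
  rewrite -(big_imset _ Hinj1) /= big_uniq //.
  apply: eq_bigl => l; rewrite hs_all; apply/imsetP.
  have [r Hr] := Hcov l (in_setT l); by exists (l, r).
have H2 : \sum_(e in Mopt) val w Mf e.2 <= weight w Mf.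
  rewrite -(big_imset _ Hinj2) /= -(sum_val w Mf).
  rewrite [X in _ <= X](bigID (mem (snd @: Mopt))) /= lerDl.
  by apply: sumr_ge0 => r _; exact: val_ge0.
lra.
Qed.
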